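(* Let $\kappa$ be a regular uncountable cardinal. There exist a pleasant ideal $J$ on $\kappa$ and a set $A\in J^+$ such that $J\restriction A$ is not pleasant.
   Context: An ideal on $\kappa$ is a family of subsets of $\kappa$ closed under subsets and finite unions, which is $<\kappa$-complete and contains all singletons. $J^+=\{X\subseteq\kappa: X\notin J\}$, and for $A\in J^+$, $J\restriction A=\{X\subseteq\kappa: X\cap A\in J\}$. For $A\subseteq\kappa$ and $X_\alpha\subseteq\kappa$, $\bigtriangledown_{\alpha\in A}X_\alpha=\{\xi<\kappa:\exists\alpha<\xi\,(\alpha\in A\wedge \xi\in X_\alpha)\}$. An ideal $J$ is pleasant if whenever $A\in J$ and $X_\alpha\in J$ for all $\alpha$, then $\bigtriangledown_{\alpha\in A}X_\alpha\in J$. *)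

(* Defs.v *)
(* A cardinal kappa is modelled as a type T of ordinals < kappa,
   well-ordered by lt, such that T is not in bijection with any proper initial
   segment (i.e. kappa is an initial ordinal). *)
From Stdlib Require Import Wellfounded.

Definition subset (T : Type) := T -> Prop.

Definition injective {A B : Type} (f : A -> B) : Prop :=
  forall x y, f x = f y -> x = y.

Definition below {T : Type} (lt : T -> T -> Prop) (a : T) : Type := {b : T | lt b a}.

Record regular_uncountable_cardinal (T : Type) (lt : T -> T -> Prop) : Prop := {
  ruc_irrefl : forall x, ~ lt x x;
  ruc_trans : forall x y z, lt x y -> lt y z -> lt x z;
  ruc_total : forall x y, lt x y \/ x = y \/ lt y x;
  ruc_wf : well_founded lt;
  ruc_cardinal : forall a : T, ~ exists f : T -> below lt a, injective f;
  ruc_uncountable : ~ exists f : T -> nat, injective f;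
  ruc_regular : forall X : subset T,
      (forall a, exists b, X b /\ ~ lt b a) ->
      forall a : T, ~ exists f : {x : T | X x} -> below lt a, injective f
}.

(* An ideal on kappa: closed under subsets and finite unions, <kappa-complete
   (closed under unions of fewer than kappa sets, i.e. of families indexed
   by some alpha < kappa), and contains all singletons. *)
Definition is_ideal {T : Type} (lt : T -> T -> Prop) (J : subset (subset T)) : Prop :=
  (forall X Y : subset T, J Y -> (forall x, X x -> Y x) -> J X) /\
  (forall X Y : subset T, J X -> J Y -> J (fun x => X x \/ Y x)) /\
  (forall (a : T) (X : T -> subset T),
      (forall b, lt b a -> J (X b)) ->
      J (fun x => exists b, lt b a /\ X b x)) /\
  (forall a : T, J (fun x => x = a)).

Definition positive {T : Type} (J : subset (subset T)) (X : subset T) : Prop := ~ J X.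

Definition restrict {T : Type} (J : subset (subset T)) (A : subset T) : subset (subset T) :=
  fun X => J (fun x => X x /\ A x).

Definition diag_union {T : Type} (lt : T -> T -> Prop) (A : subset T) (X : T -> subset T)
  : subset T :=
  fun xi => exists a, lt a xi /\ A a /\ X a xi.

Definition pleasant {T : Type} (lt : T -> T -> Prop) (J : subset (subset T)) : Prop :=
  forall (A : subset T) (X : T -> subset T),
    J A -> (forall a, J (X a)) -> J (diag_union lt A X).

(* Main.v *)
Require Import Defs.
From Stdlib Require Import Classical ClassicalEpsilon ProofIrrelevance Wellfounded.

Definition bnd {T : Type} (lt : T -> T -> Prop) (X : subset T) : Prop :=
  exists c, forall x, X x -> ~ lt c x.

Lemma nomax {T : Type} {lt : T -> T -> Prop} (H : regular_uncountable_cardinal T lt) :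
  forall x, exists y, lt x y.
Proof.
  intros m. apply NNPP; intro Hn.
  assert (Hmax : forall y, ~ lt m y) by (intros y Hy; apply Hn; eauto).
  assert (Hreg : forall a, ~ exists f : {x : T | x = m} -> below lt a, injective f).
  { intros a. apply (ruc_regular _ _ H (fun z => z = m)).
    intros b. exists m. split; auto. }
  assert (Hinj : forall x y : T, lt x y -> False).
  { intros x y Hxy. apply (Hreg y). exists (fun _ => exist _ x Hxy).
    intros u v _. destruct u as [p1 e1]. destruct v as [p2 e2].
    assert (E : p1 = p2) by congruence. destruct E. rewrite (proof_irrelevance _ e1 e2). reflexivity. }
  apply (ruc_uncountable _ _ H). exists (fun _ => 0). intros x y _.
  destruct (ruc_total _ _ H x y) as [Hxy|[E|Hyx]]; auto; exfalso; eauto.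
Qed.

Lemma least {T : Type} {lt : T -> T -> Prop} (H : regular_uncountable_cardinal T lt)
  (P : T -> Prop) : (exists x, P x) -> exists m, P m /\ forall y, P y -> ~ lt y m.
Proof.
  intros [x0 Px]. revert Px.
  induction x0 as [x0 IH] using (well_founded_ind (ruc_wf _ _ H)). intros Px.
  destruct (classic (exists y, P y /\ lt y x0)) as [[y [Py Ly]]|N].
  - eapply IH; eauto.
  - exists x0; split; auto. intros y Py Ly; apply N; eauto.
Qed.

Definition ls {T : Type} {lt : T -> T -> Prop} (H : regular_uncountable_cardinal T lt)
  (x : T) : T :=
  proj1_sig (constructive_indefinite_description _ (least H (lt x) (nomax H x))).

Lemma ls_spec {T : Type} {lt : T -> T -> Prop} (H : regular_uncountable_cardinal T lt)
  (x : T) : lt x (ls H x) /\ forall y, lt x y -> ~ lt y (ls H x).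
Proof.
  unfold ls. destruct (constructive_indefinite_description _ _) as [m Hm]. exact Hm.
Qed.

Lemma ls_inj {T : Type} {lt : T -> T -> Prop} (H : regular_uncountable_cardinal T lt)
  (y c : T) : ls H y = ls H c -> y = c.
Proof.
  intros E. destruct (ls_spec H y) as [Ly My]. destruct (ls_spec H c) as [Lc Mc].
  destruct (ruc_total _ _ H y c) as [Hyc|[Hyc|Hcy]]; auto; exfalso.
  - apply (My c Hyc). rewrite E. exact Lc.
  - apply (Mc y Hcy). rewrite <- E. exact Ly.
Qed.

Lemma pred_lt {T : Type} {lt : T -> T -> Prop} (H : regular_uncountable_cardinal T lt)
  (x : T) (Hx : exists y, x = ls H y) :
  lt (proj1_sig (constructive_indefinite_description _ Hx)) x.
Proof.
  destruct (constructive_indefinite_description _ Hx) as [y Hy]. simpl.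
  rewrite Hy. apply (ls_spec H y).
Qed.

Definition parF {T : Type} {lt : T -> T -> Prop} (H : regular_uncountable_cardinal T lt)
  (x : T) (rec : forall y, lt y x -> bool) : bool :=
  match excluded_middle_informative (exists y, x = ls H y) with
  | left Hx => negb (rec _ (pred_lt H x Hx))
  | right _ => false
  end.

Definition par {T : Type} {lt : T -> T -> Prop} (H : regular_uncountable_cardinal T lt) :
  T -> bool := Fix (ruc_wf _ _ H) (fun _ => bool) (parF H).

Lemma par_ls {T : Type} {lt : T -> T -> Prop} (H : regular_uncountable_cardinal T lt)
  (c : T) : par H (ls H c) = negb (par H c).
Proof.
  unfold par at 1. rewrite Fix_eq.
  - unfold parF. destruct (excluded_middle_informative _) as [Hx|Hn].
    + cbn beta. f_equal. fold (par H).
      destruct (constructive_indefinite_description _ Hx) as [y Hy]. simpl.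
      apply ls_inj in Hy. subst. reflexivity.
    + exfalso; apply Hn; eauto.
  - intros x f g Hfg. unfold parF.
    destruct (excluded_middle_informative _); auto. rewrite Hfg. reflexivity.
Qed.

Lemma bnd_union {T : Type} {lt : T -> T -> Prop} (H : regular_uncountable_cardinal T lt)
  (a : T) (X : T -> subset T) :
  (forall b, lt b a -> bnd lt (X b)) -> bnd lt (fun x => exists b, lt b a /\ X b x).
Proof.
  intros HX.
  assert (G : forall b, exists c, lt b a -> forall x, X b x -> ~ lt c x).
  { intros b. destruct (classic (lt b a)) as [L|N].
    - destruct (HX b L) as [c Hc]; exists c; auto.
    - exists b; intro; contradiction. }
  set (g := fun b => proj1_sig (constructive_indefinite_description _ (G b))).
  assert (Hg : forall b, lt b a -> forall x, X b x -> ~ lt (g b) x).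
  { intros b. exact (proj2_sig (constructive_indefinite_description _ (G b))). }
  set (Y := fun y => exists b, lt b a /\ g b = y).
  assert (HY : exists c, forall y, Y y -> lt y c).
  { apply NNPP; intro N. apply (ruc_regular _ _ H Y) with (a := a).
    - intros c. apply NNPP; intro N2. apply N. exists c. intros y Yy.
      apply NNPP; intro N3. apply N2. exists y; auto.
    - exists (fun u => exist (fun b => lt b a)
                 (proj1_sig (constructive_indefinite_description _ (proj2_sig u)))
                 (proj1 (proj2_sig (constructive_indefinite_description _ (proj2_sig u))))).
      intros u v E. destruct u as [y1 Y1]. destruct v as [y2 Y2].
      apply (f_equal (@proj1_sig _ _)) in E. simpl in E.
      pose proof (proj2 (proj2_sig (constructive_indefinite_description _ Y1))) as G1.
      pose proof (proj2 (proj2_sig (constructive_indefinite_description _ Y2))) as G2.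
      simpl in G1, G2. rewrite E in G1.
      assert (Ey : y1 = y2) by congruence. destruct Ey.
      rewrite (proof_irrelevance _ Y1 Y2). reflexivity. }
  destruct HY as [c Hc]. exists c. intros x [b [Lb Xb]] Lcx.
  apply (Hg b Lb x Xb). apply (ruc_trans _ _ H _ c); auto.
  apply Hc. exists b; auto.
Qed.

Lemma bnd_ideal {T : Type} {lt : T -> T -> Prop} (H : regular_uncountable_cardinal T lt) :
  is_ideal lt (bnd lt).
Proof.
  split; [|split; [|split]].
  - intros X Y [c Hc] S. exists c. auto.
  - intros X Y [c1 H1] [c2 H2].
    destruct (ruc_total _ _ H c1 c2) as [L|[E|L]].
    + exists c2. intros x [Xx|Yx] Lx; [apply (H1 x Xx)|apply (H2 x Yx)]; auto.
      apply (ruc_trans _ _ H _ c2); auto.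
    + subst. exists c2. intros x [Xx|Yx]; auto.
    + exists c1. intros x [Xx|Yx] Lx; [apply (H1 x Xx)|apply (H2 x Yx)]; auto.
      apply (ruc_trans _ _ H _ c1); auto.
  - intros a X HX. apply (bnd_union H a X HX).
  - intros a. exists a. intros x E; subst. apply (ruc_irrefl _ _ H).
Qed.

Lemma bnd_pleasant {T : Type} {lt : T -> T -> Prop} (H : regular_uncountable_cardinal T lt) :
  pleasant lt (bnd lt).
Proof.
  intros A X [be Hb] HX.
  destruct (nomax H be) as [s Ls].
  destruct (bnd_union H s X (fun b _ => HX b)) as [c Hc].
  exists c. intros x [a [Lax [Aa Xa]]]. apply Hc. exists a. split; auto.
  destruct (ruc_total _ _ H a s) as [L|[E|L]]; auto; exfalso.
  - subst. apply (Hb s Aa Ls).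
  - apply (Hb a Aa). apply (ruc_trans _ _ H _ s); auto.
Qed.

Theorem proposition2p5 (T : Type) (lt : T -> T -> Prop) :
  regular_uncountable_cardinal T lt ->
  exists J : subset (subset T),
    is_ideal lt J /\ pleasant lt J /\
    exists A : subset T, positive J A /\ ~ pleasant lt (restrict J A).
Proof.
  intros H.
  destruct (classic (inhabited T)) as [[t]|NI].
  2:{ exfalso. apply (ruc_uncountable _ _ H). exists (fun _ => 0). intros x.
      exfalso. apply NI. exact (inhabits x). }
  exists (bnd lt). split; [exact (bnd_ideal H)|]. split; [exact (bnd_pleasant H)|].
  exists (fun x => par H x = true). split.
  - intros [c Hc].
    destruct (ls_spec H c) as [L1 _]. destruct (ls_spec H (ls H c)) as [L2 _].
    destruct (par H (ls H c)) eqn:E.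
    + apply (Hc (ls H c) E L1).
    + apply (Hc (ls H (ls H c))).
      * rewrite par_ls, E. reflexivity.
      * apply (ruc_trans _ _ H _ (ls H c)); auto.
  - intros P.
    specialize (P (fun x => par H x = false) (fun a xi => xi = ls H a)).
    destruct P as [c Hc].
    + exists t. intros x [F1 F2]. congruence.
    + intros a. exists (ls H a). intros x [E _]. subst. apply (ruc_irrefl _ _ H).
    + destruct (ls_spec H c) as [L1 _]. destruct (ls_spec H (ls H c)) as [L2 _].
      destruct (par H c) eqn:E.
      * apply (Hc (ls H (ls H c))).
        -- split.
           ++ exists (ls H c). split; auto. split; auto. rewrite par_ls, E. reflexivity.
           ++ rewrite !par_ls, E. reflexivity.
        -- apply (ruc_trans _ _ H _ (ls H c)); auto.
      * apply (Hc (ls H c)); auto. split.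
        -- exists c. auto.
        -- rewrite par_ls, E. reflexivity.
Qed.
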